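(* Let $G=(V,E)$ be an undirected graph with $n=|V|$ nodes and let $f$ be an integer with $0<f<n$. If there exists an algorithm that solves $\epsilon$-approximate Byzantine consensus on $G$ in the asynchronous local broadcast model tolerating at most $f$ Byzantine faulty nodes, then $n \ge 3f+1$.
   Context: Communication network: an undirected graph $G=(V,E)$ known to every node; each edge is a reliable FIFO link, and a receiver knows the identity of the sender of each message. Local broadcast model: every message sent by a node $u$ is received identically and correctly by all neighbors of $u$ (so a node cannot send different messages to different neighbors). Asynchrony: nodes proceed at arbitrary speeds with no global clock, and every message is delivered after an unbounded but finite delay. At most $f$ nodes are Byzantine faulty and may behave arbitrarily, subject to the local broadcast constraint (in particular a faulty node may crash, i.e. take no steps). $\epsilon$-approximate Byzantine consensus: there are known reals $L<U$ and $\epsilon$ with $U-L>\epsilon>0$; each node starts with a real input in $[L,U]$ and must output a real value such that (1) $\epsilon$-Agreement: the outputs of any two non-faulty nodes differ by at most $\epsilon$; (2) Validity: each non-faulty node's output lies in the convex hull of the inputs of the non-faulty nodes; (3) Termination: every non-faulty node decides its output within finite time (which may depend on $U$, $L$, $\epsilon$). Once a node terminates it takes no further steps. *)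

(* Defs.v *)
From Stdlib Require Import Reals.
From mathcomp Require Import all_boot.

Set Implicit Arguments.
Unset Strict Implicit.
Unset Printing Implicit Defensive.

Local Open Scope R_scope.

Section Model.

Variable n : nat.
Variable adj : rel 'I_n.

(** A (deterministic, event-driven) distributed algorithm with local state
    type [S] and message type [M].  Every node knows the graph and its own
    identity (the algorithm is chosen after the graph, n, f, L, U, eps).
    - [init u x] : initial state of node [u] with input [x], together with the
      messages it broadcasts at start;
    - [step u s v m] : node [u] in state [s] receives message [m] from
      neighbour [v] (the receiver knows the sender); returns the new state and
      the messages it broadcasts (each broadcast goes to all neighbours);
    - [decision s] : [Some y] iff the node has decided (output) [y]; a node
      that has decided takes no further steps. *)
Record algorithm (S M : Type) := Algorithm {
  init : 'I_n -> R -> S * seq M;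
  step : 'I_n -> S -> 'I_n -> M -> S * seq M;
  decision : S -> option R
}.

Variables (S M : Type) (A : algorithm S M).

(** Global configuration: local states, and for every ordered pair (v, u)
    the FIFO queue of messages sent by v not yet delivered to u. *)
Record config := Config {
  cst : 'I_n -> S;
  chan : 'I_n -> 'I_n -> seq M
}.

Inductive event :=
  | Deliver of 'I_n & 'I_n   (* Deliver u v : u receives the head of chan v u *)
  | FaultySend of 'I_n & M.

Definition decided (s : S) : bool := if decision A s is Some _ then true else false.

(** Local broadcast: node [u] appends [ms] to the queues towards all of its
    neighbours (identically). *)
Definition bcast (q : 'I_n -> 'I_n -> seq M) (u : 'I_n) (ms : seq M) :=
  fun a b => if (a == u) && adj u b then q a b ++ ms else q a b.

Definition upd_state (st : 'I_n -> S) (u : 'I_n) (s : S) :=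
  fun w => if w == u then s else st w.

Definition upd_chan (q : 'I_n -> 'I_n -> seq M) (v u : 'I_n) (l : seq M) :=
  fun a b => if (a == v) && (b == u) then l else q a b.

Definition next (F : {set 'I_n}) (c : config) (e : event) : config :=
  match e with
  | Deliver u v =>
      match chan c v u with
      | [::] => c
      | m :: rest =>
          let q' := upd_chan (chan c) v u rest in
          if (u \in F) || decided (cst c u) then Config (cst c) q'
          else let (s', ms) := step A u (cst c u) v m in
               Config (upd_state (cst c) u s') (bcast q' u ms)
      end
  | FaultySend v m =>
      if v \in F then Config (cst c) (bcast (chan c) v [:: m]) else c
  end.

(** Initial configuration for inputs [x]: non-faulty nodes have broadcast
    their initial messages; faulty nodes send only via [FaultySend]. *)
Definition init_config (F : {set 'I_n}) (x : 'I_n -> R) : config :=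
  Config (fun u => fst (init A u (x u)))
         (fun a b => if (a \notin F) && adj a b then snd (init A a (x a)) else [::]).

Fixpoint run (F : {set 'I_n}) (x : 'I_n -> R) (sch : nat -> event) (t : nat)
  : config :=
  match t with
  | 0 => init_config F x
  | t'.+1 => next F (run F x sch t') (sch t')
  end.

Definition fair (F : {set 'I_n}) (x : 'I_n -> R) (sch : nat -> event) : Prop :=
  forall t u v, u \notin F -> chan (run F x sch t) v u <> [::] ->
    exists t', (t <= t')%N /\ sch t' = Deliver u v.

Definition output_at (F : {set 'I_n}) (x : 'I_n -> R) (sch : nat -> event) (t : nat) (u : 'I_n) : option R := decision A (cst (run F x sch t) u).

Definition correct_exec (eps : R) (F : {set 'I_n}) (x : 'I_n -> R) (sch : nat -> event) : Prop :=
  (forall u, u \notin F -> exists t y, output_at F x sch t u = Some y) /\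
  (forall u v t t' yu yv, u \notin F -> v \notin F ->
     output_at F x sch t u = Some yu -> output_at F x sch t' v = Some yv ->
     (Rabs (yu - yv) <= eps)%R) /\
  (* Validity: output in the convex hull (an interval) of non-faulty inputs *)
  (forall u t y, u \notin F -> output_at F x sch t u = Some y ->
     exists a b, a \notin F /\ b \notin F /\ (x a <= y <= x b)%R).

Definition solves (f : nat) (L U eps : R) : Prop :=
  forall (x : 'I_n -> R), (forall u, (L <= x u <= U)%R) ->
  forall (F : {set 'I_n}), (#|F| <= f)%N ->
  forall sch : nat -> event, fair F x sch -> correct_exec eps F x sch.

End Model.

(* Main.v *)
Require Import Defs.
From Stdlib Require Import Reals Lra.
From mathcomp Require Import all_boot.

Set Implicit Arguments.
Unset Strict Implicit.

Section Sim.
Variables (n : nat) (adj : rel 'I_n) (adj_irr : irreflexive adj).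
Variables (S M : Type) (A : algorithm n S M).

Notation cfg := (config n S M).
Notation nxt := (Defs.next adj A).

Lemma self_next F (c : cfg) e :
  (forall w, chan c w w = [::]) -> forall w, chan (nxt F c e) w w = [::].
Proof.
move=> H w; case: e => [u v|v m] /=.
- case E: (chan c v u) => [|m rest] //.
  have Hq : upd_chan (chan c) v u rest w w = [::].
    rewrite /upd_chan; case: ifP => [/andP[/eqP Hv /eqP Hu]|_]; last exact: H.
    by move: E; rewrite -Hv -Hu H.
  case: ifP => _ //=.
  case: (step A u (cst c u) v m) => s' ms /=.
  by rewrite /bcast; case: ifP => [/andP[/eqP-> ]|_]; [rewrite adj_irr|].
- case: ifP => _ //=; rewrite /bcast; case: ifP => [/andP[/eqP-> ]|_];
  [rewrite adj_irr|] => //; exact: H.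
Qed.

Lemma self_run F x sch t w : chan (run adj A F x sch t) w w = [::].
Proof.
elim: t w => [|t IH] w /=.
- by rewrite adj_irr andbF.
- exact: self_next.
Qed.

Lemma noop_next F (c : cfg) w : chan c w w = [::] -> nxt F c (Deliver M w w) = c.
Proof. by move=> /= ->. Qed.

Lemma faulty_next (F : {set 'I_n}) (c : cfg) (u v : 'I_n) :
  (forall b w, b \in F -> chan c b w = [::]) ->
  forall b w, b \in F -> chan (nxt F c (Deliver M u v)) b w = [::].
Proof.
move=> H b w bF /=.
case E: (chan c v u) => [|m rest] //; first exact: H.
have Hq : upd_chan (chan c) v u rest b w = [::].
  rewrite /upd_chan; case: ifP => [/andP[/eqP Hv /eqP Hu]|_]; last exact: H.
  by move: E; rewrite -Hv -Hu H.
case: ifP => uF //=.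
case: (step A u (cst c u) v m) => s' ms /=.
rewrite /bcast; case: ifP => [/andP[/eqP Hb _]|_] //.
by move: uF; rewrite -Hb bF.
Qed.


Definition ext (Cs : {set 'I_n}) (D : 'I_n -> seq M) (a b : 'I_n) : seq M :=
  if (a \in Cs) && adj a b then D a else [::].

Definition emit (F : {set 'I_n}) (c : cfg) (e : event n M) (w : 'I_n) : seq M :=
  match e with
  | Deliver u v => if u == w then
      match chan c v u with
      | [::] => [::]
      | m :: _ => if (u \in F) || decided A (cst c u) then [::]
                  else (step A u (cst c u) v m).2
      end else [::]
  | FaultySend _ _ => [::]
  end.

Definition tr (Bs : {set 'I_n}) (c : cfg) (e : event n M) : event n M :=
  match e with
  | Deliver u v => if u \in Bs then Deliver M u u else
      match chan c v u with [::] => Deliver M u u | _ => Deliver M u v end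
  | FaultySend v _ => Deliver M v v
  end.

Lemma step_sim (Bs Cs : {set 'I_n}) (disj : forall w, w \in Bs -> w \notin Cs)
  (r r' : cfg) (D D1 : 'I_n -> seq M) (u v : 'I_n) :
  (forall a, a \notin Bs -> a \notin Cs -> cst r' a = cst r a) ->
  (forall a b, a \notin Bs -> b \notin Bs -> chan r' a b = chan r a b ++ ext Cs D a b) ->
  (forall b w, b \in Bs -> chan r b w = [::]) ->
  (forall w, chan r' w w = [::]) -> (forall w, chan r w w = [::]) ->
  (forall w, w \in Cs -> D w = emit Bs r (Deliver M u v) w ++ D1 w) ->
  (forall a, a \notin Bs -> a \notin Cs ->
     cst (nxt Cs r' (tr Bs r (Deliver M u v))) a = cst (nxt Bs r (Deliver M u v)) a) /\
  (forall a b, a \notin Bs -> b \notin Bs ->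
     chan (nxt Cs r' (tr Bs r (Deliver M u v))) a b
     = chan (nxt Bs r (Deliver M u v)) a b ++ ext Cs D1 a b).
Proof.
move=> Hst Hch HB Hs' Hs HD.
have extE : (forall w, w \in Cs -> emit Bs r (Deliver M u v) w = [::]) ->
    forall a b, ext Cs D a b = ext Cs D1 a b.
  move=> Hem a b; rewrite /ext; case: ifP => // /andP[aC _].
  by rewrite HD // Hem.
rewrite /tr; case: ifP => uB.
- rewrite noop_next //.
  have Hem : forall w, w \in Cs -> emit Bs r (Deliver M u v) w = [::].
    move=> w wC /=; case: eqP => // Huw.
    by move: (disj _ uB); rewrite Huw wC.
  rewrite /=; case E: (chan r v u) => [|m rest].
  + split=> // a b aB bB; by rewrite Hch // extE.
  + rewrite uB /=; split=> // a b aB bB.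
    rewrite Hch // extE // /upd_chan; case: ifP => // /andP[_ /eqP Hbu].
    by move: bB; rewrite Hbu uB.
case E: (chan r v u) => [|m rest].
- rewrite noop_next //=; rewrite E.
  have Hem : forall w, w \in Cs -> emit Bs r (Deliver M u v) w = [::].
    by move=> w wC /=; rewrite E; case: eqP.
  split=> // a b aB bB; by rewrite Hch // extE.
have vB : v \notin Bs.
  by apply/negP => vB; move: E; rewrite HB.
have Hr'vu : chan r' v u = m :: (rest ++ ext Cs D v u).
  by rewrite Hch ?uB // E.
have nuv : u != v.
  by apply/eqP => Huv; move: E; rewrite Huv Hs.
rewrite /= Hr'vu E uB /=.
case uC: (u \in Cs) => /=.
- case dec: (decided A (cst r u)).
  + have Hem : forall w, w \in Cs -> emit Bs r (Deliver M u v) w = [::].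
      by move=> w wC /=; rewrite E uB dec; case: eqP.
    split=> // a b aB bB.
    rewrite /= /upd_chan; case: ifP => [/andP[/eqP -> /eqP ->]|_].
    * by rewrite extE.
    * by rewrite Hch // extE.
  + case Est: (step A u (cst r u) v m) => [s' ms] /=.
    have Hemu : D u = ms ++ D1 u by rewrite HD //= eqxx E uB dec Est.
    have Hemw : forall w, w \in Cs -> w != u -> D w = D1 w.
      move=> w wC nwu; rewrite HD //=; case: eqP => [Huw|_] //; by rewrite Huw eqxx in nwu.
    split.
    * move=> a aB aC; rewrite /upd_state; case: eqP => [Hau|_]; last exact: Hst.
      by move: aC; rewrite Hau uC.
    * move=> a b aB bB; rewrite /bcast /upd_chan.
      case: (eqVneq a v) => [Hav|nav].
      - subst a; have nvu : (v == u) = false by rewrite eq_sym (negbTE nuv). rewrite nvu /=.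
        case: eqP => [->|_]; last rewrite Hch //; rewrite /ext; case: ifP => // /andP[vC _];
        by rewrite Hemw // eq_sym.
      - rewrite /= Hch //.
        case: (eqVneq a u) => [Hau|nau] /=.
        + subst a; rewrite /ext uC /=; case: ifP => adjub //.
          by rewrite Hemu catA.
        + rewrite /ext; case: ifP => // /andP[aC _]; by rewrite Hemw.
- have Hcu : cst r' u = cst r u by apply: Hst; rewrite ?uB ?uC.
  have Hem : forall w, w \in Cs -> emit Bs r (Deliver M u v) w = [::].
    move=> w wC /=; case: eqP => // Huw; by move: uC; rewrite Huw wC.
  rewrite Hcu.
  case dec: (decided A (cst r u)) => /=.
  + split=> // a b aB bB.
    rewrite /= /upd_chan; case: ifP => [/andP[/eqP -> /eqP ->]|_].
    * by rewrite extE.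
    * by rewrite Hch // extE.
  + case Est: (step A u (cst r u) v m) => [s' ms] /=.
    split.
    * move=> a aB aC; rewrite /upd_state; case: eqP => // _; exact: Hst.
    * move=> a b aB bB; rewrite /bcast /upd_chan -(extE Hem).
      case: (eqVneq a v) => [Hav|nav].
      - subst a; have nvu : (v == u) = false by rewrite eq_sym (negbTE nuv). rewrite nvu /=.
        case: eqP => [->|_] //; exact: Hch.
      - rewrite /= Hch //.
        case: (eqVneq a u) => [Hau|nau] /=.
        + subst a; rewrite /ext uC /=; case: ifP => adjub //; by rewrite !cats0.
        + by [].
Qed.


Fixpoint runf (F : {set 'I_n}) (c : cfg) (sch : nat -> event n M) (t : nat) : cfg :=
  match t with 0 => c | t'.+1 => nxt F (runf F c sch t') (sch t') end.

Lemma run_runf F x sch t : run adj A F x sch t = runf F (init_config adj A F x) sch t.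
Proof. by elim: t => //= t ->. Qed.

Lemma runf_list F c sch d (l : seq (event n M)) :
  (forall i, i < size l -> sch i = nth d l i) -> runf F c sch (size l) = foldl (nxt F) c l.
Proof.
elim/last_ind: l => [|l e IH] H //=.
rewrite size_rcons /= foldl_rcons IH; last first.
  move=> i il; rewrite H; last by rewrite size_rcons ltnS ltnW.
  by rewrite nth_rcons il.
by rewrite H; [rewrite nth_rcons ltnn eqxx | rewrite size_rcons ltnSn].
Qed.

Lemma fold_fs (Cs : {set 'I_n}) (c : cfg) w (l : seq M) : w \in Cs ->
  cst (foldl (nxt Cs) c [seq FaultySend w m | m <- l]) = cst c /\
  forall a b, chan (foldl (nxt Cs) c [seq FaultySend w m | m <- l]) a b =
     if (a == w) && adj w b then chan c a b ++ l else chan c a b.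
Proof.
move=> wC; elim: l c => [|m l IH] c /=.
  by split=> // a b; case: ifP => //; rewrite cats0.
rewrite wC; case: (IH (Config (cst c) (bcast adj (chan c) w [:: m]))) => -> H2.
split=> // a b; rewrite H2 /= /bcast; case: ((a == w) && adj w b) => //; by rewrite -catA.
Qed.

Lemma fold_fs_all (Cs : {set 'I_n}) (c : cfg) (ws : seq 'I_n) (Sq : 'I_n -> seq M) :
  uniq ws -> {subset ws <= Cs} ->
  cst (foldl (nxt Cs) c (flatten [seq [seq FaultySend w m | m <- Sq w] | w <- ws])) = cst c /\
  forall a b, chan (foldl (nxt Cs) c (flatten [seq [seq FaultySend w m | m <- Sq w] | w <- ws])) a b =
     chan c a b ++ (if (a \in ws) && adj a b then Sq a else [::]).
Proof.
elim: ws c => [|w ws IH] c /=.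
  by move=> _ _; split=> // a b; rewrite cats0.
move=> /andP[wn u] sub.
rewrite foldl_cat.
have wC : w \in Cs by apply: sub; rewrite inE eqxx.
case: (fold_fs c (Sq w) wC) => H1 H2.
case: (IH (foldl (nxt Cs) c [seq FaultySend w m | m <- Sq w]) u) => [z zw|H3 H4].
  by apply: sub; rewrite inE zw orbT.
rewrite H3 H1; split=> // a b; rewrite H4 H2 inE.
case: (eqVneq a w) => [->|naw] /=.
- by rewrite (negbTE wn) /=; case: ifP => _; rewrite ?cats0.
- by [].
Qed.

Lemma faulty_run (F : {set 'I_n}) x sch :
  (forall t, exists u v, sch t = Deliver M u v) ->
  forall t b w, b \in F -> chan (run adj A F x sch t) b w = [::].
Proof.
move=> Hs; elim=> [|t IH] b w bF /=.
  by rewrite bF.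
case: (Hs t) => u [v ->]; exact: faulty_next.
Qed.

Fixpoint sent (Bs : {set 'I_n}) x sch (t : nat) (w : 'I_n) : seq M :=
  match t with
  | 0 => (init A w (x w)).2
  | t'.+1 => sent Bs x sch t' w ++ emit Bs (run adj A Bs x sch t') (sch t') w
  end.

Lemma sent_prefix Bs x sch t t' w : t <= t' -> exists s, sent Bs x sch t' w = sent Bs x sch t w ++ s.
Proof.
move=> /subnKC <-; elim: (t' - t) => [|k [s Hs]].
  by exists [::]; rewrite addn0 cats0.
by exists (s ++ emit Bs (run adj A Bs x sch (t + k)) (sch (t + k)) w); rewrite addnS /= Hs catA.
Qed.


Lemma drop_helper (T : Type) (a e s : seq T) :
  drop (size a) ((a ++ e) ++ s) = e ++ drop (size (a ++ e)) ((a ++ e) ++ s).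
Proof. rewrite [in RHS]drop_size_cat // -catA drop_size_cat //. Qed.

Lemma sim (Bs Cs : {set 'I_n}) (disj : forall w, w \in Bs -> w \notin Cs)
  (x : 'I_n -> R) (val : R)
  (hx : forall a, a \notin Bs -> a \notin Cs -> x a = val)
  (sch : nat -> event n M) (hsch : forall t, exists u v, sch t = Deliver M u v) (t1 : nat) :
  exists sch' T, (forall t, T <= t -> sch' t = sch t) /\
   forall a, a \notin Bs -> a \notin Cs ->
     cst (run adj A Cs (fun _ => val) sch' T) a = cst (run adj A Bs x sch t1) a.
Proof.
pose Sq w := sent Bs x sch t1 w.
pose P := flatten [seq [seq FaultySend w m | m <- Sq w] | w <- enum Cs].
pose k := size P.
pose sch' t := if t < k then nth (sch 0) P t
  else if t < k + t1 then tr Bs (run adj A Bs x sch (t - k)) (sch (t - k)) else sch t.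
exists sch', (k + t1); split.
  move=> t kt; rewrite /sch' ifF; last by apply/negbTE; rewrite -leqNgt (leq_trans (leq_addr _ _) kt).
  by rewrite ifF //; apply/negbTE; rewrite -leqNgt.
pose D t w := drop (size (sent Bs x sch t w)) (Sq w).
pose x' := fun _ : 'I_n => val.
have inv : forall t, t <= t1 ->
  (forall a, a \notin Bs -> a \notin Cs -> cst (run adj A Cs x' sch' (k + t)) a = cst (run adj A Bs x sch t) a) /\
  (forall a b, a \notin Bs -> b \notin Bs ->
     chan (run adj A Cs x' sch' (k + t)) a b = chan (run adj A Bs x sch t) a b ++ ext Cs (D t) a b).
  elim=> [|t IH] tt1.
  - have Hk : run adj A Cs x' sch' k = foldl (nxt Cs) (init_config adj A Cs x') P.
      rewrite run_runf (@runf_list _ _ _ (sch 0)) // => i ik.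
      by rewrite /sch' ik.
    rewrite addn0 Hk.
    case: (@fold_fs_all Cs (init_config adj A Cs x') (enum Cs) Sq (enum_uniq _)) => [z|H1 H2].
      by rewrite mem_enum.
    split.
    + move=> a aB aC; rewrite H1 /= /x' hx //.
    + move=> a b aB bB; rewrite H2 /= mem_enum /ext (negbTE aB) /=.
      case aC: (a \in Cs) => /=.
      * rewrite /D /Sq /=; case: ifP => // _.
        case: (@sent_prefix Bs x sch 0 t1 a) => // s Hs.
        by rewrite Hs /= drop_size_cat.
      * by rewrite /x' hx ?aC // cats0.
  - have tlt : t < t1 by [].
    case: (IH (ltnW tlt)) => Hc Hq.
    have Hsch : sch' (k + t) = tr Bs (run adj A Bs x sch t) (sch t).
      rewrite /sch' ifF; last by apply/negbTE; rewrite -leqNgt leq_addr.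
      by rewrite ltn_add2l tlt addKn.
    case: (hsch t) => u [v Hsv].
    rewrite addnS /= Hsch Hsv.
    rewrite Hsv in Hsch.
    apply: (step_sim disj Hc Hq).
    + move=> b w bB; exact: (@faulty_run Bs x sch hsch t b w bB).
    + move=> w; exact: self_run.
    + move=> w; exact: self_run.
    + move=> w wC; rewrite /D /Sq.
      case: (@sent_prefix Bs x sch t.+1 t1 w) => // s Hs.
      rewrite Hs -Hsv; exact: (drop_helper (sent Bs x sch t w) (emit Bs (run adj A Bs x sch t) (sch t) w) s).
by case: (inv t1 (leqnn _)) => Hc _.
Qed.

End Sim.
From mathcomp Require Import zify.
Lemma card_range n lo hi : #|[set i : 'I_n | lo <= i < hi]| <= hi - lo.
Proof.
rewrite cardE -(size_map val) -(size_iota lo (hi - lo)).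
apply: uniq_leq_size.
  by rewrite map_inj_uniq ?enum_uniq //; exact: val_inj.
move=> z /mapP [i]; rewrite mem_enum inE => /andP[h1 h2] ->.
rewrite mem_iota; apply/andP; split => //; rewrite -[\val i]/(nat_of_ord i); lia.
Qed.

Definition rr n M (n0 : 0 < n) (t : nat) : event n M :=
  Deliver M (Ordinal (ltn_pmod t n0)) (Ordinal (ltn_pmod (t %/ n) n0)).

Lemma rr_fair n adj S M (A : algorithm n S M) (n0 : 0 < n) F x sch T :
  (forall t, T <= t -> sch t = rr M n0 t) -> fair adj A F x sch.
Proof.
move=> H t u v _ _.
pose t0 := T + t.
have Hv : v < n := ltn_ord v.
have Hu : u < n := ltn_ord u.
have e1 : t <= t0 * n by rewrite (leq_trans (leq_addl T t)) // leq_pmulr.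
have e1' : T <= t0 * n by rewrite (leq_trans (leq_addr t T)) // leq_pmulr.
have e2 : t0 * n + v <= (t0 * n + v) * n by rewrite leq_pmulr.
exists ((t0 * n + v) * n + u); split.
  lia.
rewrite H; last by lia.
rewrite /rr; congr Deliver; apply: val_inj => /=.
- by rewrite modnMDl modn_small.
- by rewrite divnMDl // divn_small // addn0 modnMDl modn_small.
Qed.

Local Open Scope R_scope.

Theorem theorem1 (n f : nat) (adj : rel 'I_n)
  (adj_sym : symmetric adj) (adj_irr : irreflexive adj)
  (f_pos : (0 < f)%N) (f_lt_n : (f < n)%N)
  (L U eps : R) (eps_pos : (0 < eps)%R) (eps_lt : (eps < U - L)%R) :
  (exists (S M : Type) (A : algorithm n S M), solves adj A f L U eps) ->
  (3 * f + 1 <= n)%N.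
Proof.
move=> [S [M [A Hsol]]].
rewrite leqNgt; apply/negP => hn.
have n0 : (0 < n)%N by apply: leq_ltn_trans f_lt_n.
pose As := [set i : 'I_n | (0 <= i < f)%N].
pose Cs := [set i : 'I_n | (f <= i < 2 * f)%N].
pose Bs := [set i : 'I_n | (2 * f <= i < n)%N].
have cA : (#|As| <= f)%N by rewrite (leq_trans (card_range _ _ _)) // subn0.
have cC : (#|Cs| <= f)%N by rewrite (leq_trans (card_range _ _ _)) //; lia.
have cB : (#|Bs| <= f)%N by rewrite (leq_trans (card_range _ _ _)) //; lia.
have iOK : forall i : 'I_n, (i < n)%N := fun i => ltn_ord i.
have dBC : forall w, w \in Bs -> w \notin Cs.
  by move=> w; rewrite !inE; move: (iOK w); lia.
have dBA : forall w, w \in Bs -> w \notin As.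
  by move=> w; rewrite !inE; move: (iOK w); lia.
pose a0 : 'I_n := Ordinal n0.
pose c0 : 'I_n := Ordinal f_lt_n.
have a0A : a0 \in As by rewrite inE /=.
have c0C : c0 \in Cs by rewrite inE /=; lia.
have a0B : a0 \notin Bs by rewrite inE /=; lia.
have c0B : c0 \notin Bs by rewrite inE /=; lia.
have a0C : a0 \notin Cs by rewrite inE /=; lia.
have c0A : c0 \notin As by rewrite inE /=; lia.
have LU : L <= U by lra.
pose x := fun i : 'I_n => if i \in Cs then U else L.
have xr : forall u, L <= x u <= U by move=> u; rewrite /x; case: ifP => _; lra.
have fair0 : fair adj A Bs x (rr M n0) by apply: (@rr_fair _ _ _ _ _ n0 _ _ _ 0).
have hsch : forall t, exists u v, rr M n0 t = Deliver M u v by move=> t; do 2 eexists.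
case: (Hsol x xr Bs cB (rr M n0) fair0) => Hterm [Hagr _].
case: (Hterm a0 a0B) => t1 [ya Hya].
case: (Hterm c0 c0B) => t2 [yc Hyc].
have Hay := Hagr _ _ _ _ _ _ a0B c0B Hya Hyc.
have yaL : ya = L.
  have hx : forall a, a \notin Bs -> a \notin Cs -> x a = L.
    by move=> a _ aC; rewrite /x (negbTE aC).
  case: (sim adj_irr A dBC hx hsch t1) => sch' [T [HT Hc]].
  have fr : fair adj A Cs (fun _ => L) sch'.
    apply: (@rr_fair _ _ _ _ _ n0 _ _ _ T) => t Tt; exact: HT.
  have xr' : forall u : 'I_n, L <= L <= U by move=> _; lra.
  case: (Hsol _ xr' Cs cC sch' fr) => _ [_ Hval].
  have Ho : output_at adj A Cs (fun _ => L) sch' T a0 = Some ya.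
    by rewrite /output_at Hc.
  case: (Hval a0 T ya a0C Ho) => a [b [_ [_ Hab]]]; lra.
have ycU : yc = U.
  have hx : forall a, a \notin Bs -> a \notin As -> x a = U.
    move=> a aB aA; rewrite /x ifT //; move: aB aA; rewrite !inE; move: (iOK a); lia.
  case: (sim adj_irr A dBA hx hsch t2) => sch' [T [HT Hc]].
  have fr : fair adj A As (fun _ => U) sch'.
    apply: (@rr_fair _ _ _ _ _ n0 _ _ _ T) => t Tt; exact: HT.
  have xr' : forall u : 'I_n, L <= U <= U by move=> _; lra.
  case: (Hsol _ xr' As cA sch' fr) => _ [_ Hval].
  have Ho : output_at adj A As (fun _ => U) sch' T c0 = Some yc.
    by rewrite /output_at Hc.
  case: (Hval c0 T yc c0A Ho) => a [b [_ [_ Hab]]]; lra.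
rewrite yaL ycU Rabs_minus_sym Rabs_right in Hay; lra.
Qed.
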